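(* Let $(G_n)_{n\in\mathbb N}$ be a sequence of topological groups, each metrized by a left-invariant distance $d_n$ inducing its topology, and let $p\in[1,\infty)$. Then $\ell_p((G_n)_n):=\{(x_n)_n: x_n\in G_n,\ \sum_n d_n(x_n,e_{G_n})^p<\infty\}$, with componentwise multiplication $(x_n)_n\cdot(y_n)_n=(x_ny_n)_n$ and the distance $d((x_n)_n,(y_n)_n)=\big(\sum_n d_n(x_n,y_n)^p\big)^{1/p}$, is a topological group. *)

(* Defs.v *)
From Stdlib Require Import Reals Lra ClassicalEpsilon.
Open Scope R_scope.

Definition is_metric {X : Type} (d : X -> X -> R) : Prop :=
  (forall x y, 0 <= d x y) /\
  (forall x y, d x y = 0 <-> x = y) /\
  (forall x y, d x y = d y x) /\
  (forall x y z, d x z <= d x y + d y z).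

(* A topological group whose topology is induced by a left-invariant metric:
   group laws, metric axioms, left invariance, and continuity of multiplication
   and inversion w.r.t. the metric topology (epsilon-delta). *)
Record MetricGroup := {
  carrier :> Type;
  gmul : carrier -> carrier -> carrier;
  ginv : carrier -> carrier;
  gone : carrier;
  gdist : carrier -> carrier -> R;
  gmulA : forall x y z, gmul x (gmul y z) = gmul (gmul x y) z;
  gmul1l : forall x, gmul gone x = x;
  gmul1r : forall x, gmul x gone = x;
  gmulVl : forall x, gmul (ginv x) x = gone;
  gmulVr : forall x, gmul x (ginv x) = gone;
  gdist_metric : is_metric gdist;
  gdist_linv : forall g x y, gdist (gmul g x) (gmul g y) = gdist x y;
  gmul_cont : forall x y eps, 0 < eps -> exists delta, 0 < delta /\
     forall x' y', gdist x x' < delta -> gdist y y' < delta ->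
       gdist (gmul x y) (gmul x' y') < eps;
  ginv_cont : forall x eps, 0 < eps -> exists delta, 0 < delta /\
     forall x', gdist x x' < delta -> gdist (ginv x) (ginv x') < eps
}.

(* x^a for x >= 0, a > 0, with 0^a = 0. *)
Definition rpow (x a : R) : R := if Rle_dec x 0 then 0 else Rpower x a.

(* Sum of a convergent real series (chosen value if it diverges; only used
   for convergent series). *)
Definition series_sum (f : nat -> R) : R :=
  epsilon (inhabits 0) (fun s => infinite_sum f s).

Section Lp.
Variable G : nat -> MetricGroup.
Variable p : R.

Definition Prod := forall n, carrier (G n).

Definition pmul (x y : Prod) : Prod := fun n => gmul (G n) (x n) (y n).
Definition pinv (x : Prod) : Prod := fun n => ginv (G n) (x n).
Definition pone : Prod := fun n => gone (G n).

Definition in_lp (x : Prod) : Prop :=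
  exists s, infinite_sum (fun n => rpow (gdist (G n) (x n) (gone (G n))) p) s.

Definition lp_dist (x y : Prod) : R :=
  rpow (series_sum (fun n => rpow (gdist (G n) (x n) (y n)) p)) (1 / p).

Definition lp_is_topological_group : Prop :=
  in_lp pone /\
  (forall x y, in_lp x -> in_lp y -> in_lp (pmul x y)) /\
  (forall x, in_lp x -> in_lp (pinv x)) /\
  (forall x y, in_lp x -> in_lp y ->
     exists s, infinite_sum (fun n => rpow (gdist (G n) (x n) (y n)) p) s) /\
  (forall x y, in_lp x -> in_lp y -> 0 <= lp_dist x y) /\
  (forall x y, in_lp x -> in_lp y -> (lp_dist x y = 0 <-> x = y)) /\
  (forall x y, in_lp x -> in_lp y -> lp_dist x y = lp_dist y x) /\
  (forall x y z, in_lp x -> in_lp y -> in_lp z ->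
     lp_dist x z <= lp_dist x y + lp_dist y z) /\
  (forall x y eps, in_lp x -> in_lp y -> 0 < eps -> exists delta, 0 < delta /\
     forall x' y', in_lp x' -> in_lp y' ->
       lp_dist x x' < delta -> lp_dist y y' < delta ->
       lp_dist (pmul x y) (pmul x' y') < eps) /\
  (forall x eps, in_lp x -> 0 < eps -> exists delta, 0 < delta /\
     forall x', in_lp x' -> lp_dist x x' < delta ->
       lp_dist (pinv x) (pinv x') < eps).
End Lp.

(* Main.v *)
Require Import Defs.
From Stdlib Require Import Reals Lra ClassicalEpsilon.
Open Scope R_scope.

Lemma rpow_ge0 x a : 0 <= rpow x a.
Proof. unfold rpow; destruct (Rle_dec x 0). lra. unfold Rpower; left; apply exp_pos. Qed.

Lemma rpow_pos x a : 0 < x -> rpow x a = Rpower x a.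
Proof. intros; unfold rpow; destruct (Rle_dec x 0); lra. Qed.

Lemma rpow_0 a : rpow 0 a = 0.
Proof. unfold rpow; destruct (Rle_dec 0 0); lra. Qed.

Lemma rpow_gt0 x a : 0 < x -> 0 < rpow x a.
Proof. intros; rewrite rpow_pos; auto; unfold Rpower; apply exp_pos. Qed.

Lemma rpow_le a x y : 0 < a -> 0 <= x <= y -> rpow x a <= rpow y a.
Proof.
  intros Ha [H1 H2]. destruct H1 as [H1|H1].
  - rewrite !rpow_pos by lra. apply Rle_Rpower_l; lra.
  - subst. rewrite rpow_0. apply rpow_ge0.
Qed.

Lemma rpow_lt a x y : 0 < a -> 0 <= x < y -> rpow x a < rpow y a.
Proof.
  intros Ha [H1 H2]. destruct H1 as [H1|H1].
  - rewrite !rpow_pos by lra. apply Rlt_Rpower_l; lra.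
  - subst. rewrite rpow_0. apply rpow_gt0; lra.
Qed.

Lemma rpow_inv p x : 0 < p -> 0 <= x -> rpow (rpow x p) (1/p) = x.
Proof.
  intros Hp [Hx|Hx].
  - rewrite (rpow_pos x) by lra. rewrite rpow_pos by (unfold Rpower; apply exp_pos).
    rewrite Rpower_mult. replace (p * (1/p)) with 1 by (field; lra). apply Rpower_1; lra.
  - subst. rewrite !rpow_0. reflexivity.
Qed.

Lemma rpow_inv' p x : 0 < p -> 0 <= x -> rpow (rpow x (1/p)) p = x.
Proof.
  intros Hp [Hx|Hx].
  - rewrite (rpow_pos x) by lra. rewrite rpow_pos by (unfold Rpower; apply exp_pos).
    rewrite Rpower_mult. replace ((1/p) * p) with 1 by (field; lra). apply Rpower_1; lra.
  - subst. rewrite !rpow_0. reflexivity.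
Qed.

Lemma rpow_eq0 a x : 0 <= x -> rpow x a = 0 -> x = 0.
Proof.
  intros [Hx|Hx] H; auto. pose proof (rpow_gt0 x a Hx). lra.
Qed.

Lemma rpow_mul a c x : 0 <= c -> 0 <= x -> rpow (c*x) a = rpow c a * rpow x a.
Proof.
  intros [Hc|Hc] [Hx|Hx].
  - rewrite !rpow_pos; try lra. symmetry; apply Rpower_mult_distr; lra. nra.
  - subst. rewrite Rmult_0_r, rpow_0; ring.
  - subst. rewrite Rmult_0_l, rpow_0; ring.
  - subst. rewrite Rmult_0_l, rpow_0; ring.
Qed.

Lemma bern p t : 1 <= p -> 0 <= t -> 1 + p*(t-1) <= rpow t p.
Proof.
  intros Hp [Ht|Ht].
  - rewrite rpow_pos by lra. unfold Rpower.
    replace (p * ln t) with (ln t + (p-1) * ln t) by ring.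
    rewrite exp_plus, exp_ln by lra.
    pose proof (exp_ineq1_le ((p-1)*ln t)).
    pose proof (exp_ineq1_le (ln (/t))). rewrite exp_ln in H0 by (apply Rinv_0_lt_compat; lra).
    rewrite ln_Rinv in H0 by lra.
    assert (t * ln t >= t - 1).
    { assert (t * (1 - ln t) <= t * / t) by (apply Rmult_le_compat_l; lra).
      rewrite Rinv_r in H1 by lra. lra. }
    assert (t * (1 + (p-1)*ln t) <= t * exp ((p-1)*ln t)) by (apply Rmult_le_compat_l; lra).
    nra.
  - subst. rewrite rpow_0. lra.
Qed.

Lemma rpow_convex p lam x y : 1 <= p -> 0 <= lam <= 1 -> 0 <= x -> 0 <= y ->
  rpow (lam*x+(1-lam)*y) p <= lam*rpow x p + (1-lam)* rpow y p.
Proof.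
  intros Hp Hl Hx Hy. set (z := lam*x+(1-lam)*y).
  assert (Hz: 0 <= z) by (unfold z; nra).
  pose proof (rpow_ge0 x p). pose proof (rpow_ge0 y p).
  destruct Hz as [Hz|Hz].
  2:{ rewrite <- Hz, rpow_0. nra. }
  set (K := rpow z p). assert (HK: 0 < K) by (apply rpow_gt0; auto).
  assert (HKi : rpow (/z) p * K = 1).
  { unfold K; rewrite <- rpow_mul by (try apply Rlt_le, Rinv_0_lt_compat; lra).
    rewrite Rinv_l by lra. rewrite rpow_pos by lra. unfold Rpower; rewrite ln_1, Rmult_0_r; apply exp_0. }
  assert (forall u, 0 <= u -> K + K*p/z*u - K*p <= rpow u p).
  { intros u Hu. pose proof (bern p (/z * u) Hp).
    rewrite rpow_mul in H1 by (try apply Rlt_le, Rinv_0_lt_compat; lra).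
    assert (0 <= /z*u) by (apply Rmult_le_pos; try apply Rlt_le, Rinv_0_lt_compat; lra).
    specialize (H1 H2).
    assert (K * (1 + p * (/z*u - 1)) <= K * (rpow (/z) p * rpow u p)) by (apply Rmult_le_compat_l; lra).
    replace (K * (rpow (/ z) p * rpow u p)) with (rpow (/z) p * K * rpow u p) in H3 by ring.
    rewrite HKi in H3. unfold Rdiv. lra. }
  pose proof (H1 x Hx). pose proof (H1 y Hy).
  assert (lam * (K + K * p / z * x - K * p) + (1-lam)*(K + K * p / z * y - K * p) <= lam * rpow x p + (1 - lam) * rpow y p).
  { apply Rplus_le_compat; apply Rmult_le_compat_l; lra. }
  assert (lam * (K + K * p / z * x - K * p) + (1-lam)*(K + K * p / z * y - K * p) = K).
  { replace (lam * (K + K * p / z * x - K * p) + (1-lam)*(K + K * p / z * y - K * p))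
      with (K + K*p/z * z - K*p) by (unfold z; ring). field. lra. }
  lra.
Qed.

Definition pw (p : R) (a : nat -> R) : nat -> R := fun n => rpow (a n) p.
Definition summable (f : nat -> R) := exists s, infinite_sum f s.
Definition nrm (p : R) (a : nat -> R) : R := rpow (series_sum (pw p a)) (1/p).
Definition nonneg (a : nat -> R) := forall n, 0 <= a n.

Lemma isum_le_bound f M : nonneg f -> (forall N, sum_f_R0 f N <= M) ->
  exists s, infinite_sum f s /\ s <= M.
Proof.
  intros Hf HM.
  assert (Hg : Un_growing (sum_f_R0 f)).
  { intro n; simpl. pose proof (Hf (S n)); lra. }
  assert (Hb : has_ub (sum_f_R0 f)).
  { exists M. intros x [i ->]. apply HM. }
  destruct (growing_cv _ Hg Hb) as [l Hl].
  exists l; split.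
  - exact Hl.
  - apply Rnot_lt_le; intro Hlt.
    destruct (Hl (l - M)) as [N HN]; [lra|].
    specialize (HN N (Nat.le_refl N)). specialize (HM N).
    unfold Rdist in HN. apply Rabs_def2 in HN. lra.
Qed.

Lemma isum_partial f s N : nonneg f -> infinite_sum f s -> sum_f_R0 f N <= s.
Proof. intros Hf Hs. apply sum_incr; auto. Qed.

Lemma series_sum_eq f s : infinite_sum f s -> series_sum f = s.
Proof.
  intros Hs. unfold series_sum.
  apply (uniqueness_sum f). 2: exact Hs.
  apply epsilon_spec. exists s; exact Hs.
Qed.

Lemma partial_term f n : nonneg f -> f n <= sum_f_R0 f n.
Proof.
  intros Hf. destruct n; simpl. lra.
  pose proof (cond_pos_sum f n Hf). lra.
Qed.

Lemma isum_term f s n : nonneg f -> infinite_sum f s -> f n <= s.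
Proof.
  intros Hf Hs. eapply Rle_trans. apply partial_term; auto. apply isum_partial; auto.
Qed.

Lemma isum_ge0 f s : nonneg f -> infinite_sum f s -> 0 <= s.
Proof. intros Hf Hs. eapply Rle_trans. apply (Hf 0%nat). apply (isum_term f s 0); auto. Qed.

Lemma pw_nonneg p a : nonneg (pw p a).
Proof. intro n; apply rpow_ge0. Qed.

Lemma rpow_inv_mul A p : 0 < A -> rpow (/A) p * rpow A p = 1.
Proof.
  intros HA. rewrite <- rpow_mul by (try apply Rlt_le, Rinv_0_lt_compat; lra).
  rewrite Rinv_l by lra. rewrite rpow_pos by lra. unfold Rpower; rewrite ln_1, Rmult_0_r; apply exp_0.
Qed.

Lemma fin_mink p a b A B N : 1 <= p -> nonneg a -> nonneg b -> 0 < A -> 0 < B ->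
  sum_f_R0 (pw p a) N <= rpow A p -> sum_f_R0 (pw p b) N <= rpow B p ->
  sum_f_R0 (pw p (fun n => a n + b n)) N <= rpow (A+B) p.
Proof.
  intros Hp Ha Hb HA HB HSa HSb.
  set (lam := A/(A+B)).
  assert (Hl : 0 <= lam <= 1).
  { unfold lam; split. apply Rlt_le, Rdiv_lt_0_compat; lra.
    apply Rmult_le_reg_r with (A+B); [lra|]. unfold Rdiv. rewrite Rmult_assoc, Rinv_l by lra. lra. }
  set (K := rpow (A+B) p). set (K1 := K * lam * rpow (/A) p). set (K2 := K * (1-lam) * rpow (/B) p).
  assert (Hterm : forall n, pw p (fun n => a n + b n) n <= pw p a n * K1 + pw p b n * K2).
  { intro n. unfold pw.
    assert (E : a n + b n = (A+B) * (lam * (/A * a n) + (1-lam) * (/B * b n))).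
    { unfold lam. field. lra. }
    rewrite E. rewrite rpow_mul.
    2: lra.
    2: { pose proof (Ha n); pose proof (Hb n).
         assert (0 <= /A * a n) by (apply Rmult_le_pos; [apply Rlt_le, Rinv_0_lt_compat|]; lra).
         assert (0 <= /B * b n) by (apply Rmult_le_pos; [apply Rlt_le, Rinv_0_lt_compat|]; lra).
         nra. }
    pose proof (rpow_convex p lam (/A * a n) (/B * b n) Hp Hl).
    pose proof (Ha n); pose proof (Hb n).
    assert (0 <= /A * a n) by (apply Rmult_le_pos; [apply Rlt_le, Rinv_0_lt_compat|]; lra).
    assert (0 <= /B * b n) by (apply Rmult_le_pos; [apply Rlt_le, Rinv_0_lt_compat|]; lra).
    specialize (H H2 H3).
    rewrite !rpow_mul in H by (try apply Rlt_le, Rinv_0_lt_compat; lra).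
    assert (HK : 0 <= K) by apply rpow_ge0.
    apply Rmult_le_compat_l with (r := K) in H; auto.
    unfold K1, K2. fold K. nra. }
  eapply Rle_trans. apply sum_growing. exact Hterm.
  rewrite sum_plus, <- !scal_sum.
  assert (rpow (/A) p * rpow A p = 1) by (apply rpow_inv_mul; lra).
  assert (rpow (/B) p * rpow B p = 1) by (apply rpow_inv_mul; lra).
  assert (0 <= rpow (/A) p) by apply rpow_ge0.
  assert (0 <= rpow (/B) p) by apply rpow_ge0.
  assert (HK : 0 <= K) by apply rpow_ge0.
  assert (K1 * sum_f_R0 (pw p a) N <= K1 * rpow A p).
  { apply Rmult_le_compat_l; auto. unfold K1. apply Rmult_le_pos; auto. nra. }
  assert (K2 * sum_f_R0 (pw p b) N <= K2 * rpow B p).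
  { apply Rmult_le_compat_l; auto. unfold K2. apply Rmult_le_pos; auto. nra. }
  assert (K1 * rpow A p + K2 * rpow B p = K).
  { unfold K1, K2. replace (K * lam * rpow (/ A) p * rpow A p) with (K*lam*(rpow (/ A) p * rpow A p)) by ring.
    replace (K * (1-lam) * rpow (/ B) p * rpow B p) with (K*(1-lam)*(rpow (/ B) p * rpow B p)) by ring.
    rewrite H, H0. ring. }
  fold K. lra.
Qed.

Lemma nrm_ge0 p a : 0 <= nrm p a.
Proof. apply rpow_ge0. Qed.

Lemma nrm_pow p a : 0 < p -> summable (pw p a) -> rpow (nrm p a) p = series_sum (pw p a).
Proof.
  intros Hp [s Hs]. unfold nrm. rewrite (series_sum_eq _ s Hs).
  apply rpow_inv'; auto. eapply isum_ge0; [apply pw_nonneg|eauto].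
Qed.

Lemma partial_le_nrm p a A N : 0 < p -> summable (pw p a) -> nrm p a <= A ->
  sum_f_R0 (pw p a) N <= rpow A p.
Proof.
  intros Hp Hs HA. pose proof (nrm_pow p a Hp Hs) as E.
  destruct Hs as [s Hs]. rewrite (series_sum_eq _ s Hs) in E.
  eapply Rle_trans. apply (isum_partial _ s); auto. apply pw_nonneg.
  rewrite <- E. apply rpow_le; auto. split; auto. apply nrm_ge0.
Qed.

Lemma pw_le p c d : 0 < p -> nonneg c -> (forall n, c n <= d n) -> forall n, pw p c n <= pw p d n.
Proof. intros Hp Hc H n. unfold pw. apply rpow_le; auto. Qed.

Lemma mink p a b c : 1 <= p -> nonneg a -> nonneg b -> nonneg c ->
  summable (pw p a) -> summable (pw p b) -> (forall n, c n <= a n + b n) ->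
  summable (pw p c) /\ nrm p c <= nrm p a + nrm p b.
Proof.
  intros Hp Ha Hb Hc Sa Sb Hcab.
  assert (Hp0 : 0 < p) by lra.
  assert (Key : forall A B, nrm p a < A -> nrm p b < B -> forall N,
            sum_f_R0 (pw p c) N <= rpow (A+B) p).
  { intros A B HA HB N.
    pose proof (nrm_ge0 p a). pose proof (nrm_ge0 p b).
    eapply Rle_trans. apply sum_growing. apply (pw_le p c (fun n => a n + b n)); auto.
    apply fin_mink; auto; try lra; apply partial_le_nrm; auto; lra. }
  destruct (isum_le_bound (pw p c) (rpow (nrm p a + 1 + (nrm p b + 1)) p)) as [s [Hs _]].
  apply pw_nonneg. apply Key; lra.
  split. exists s; auto.
  apply Rle_plus_epsilon. intros e He.
  destruct (isum_le_bound (pw p c) (rpow (nrm p a + e/2 + (nrm p b + e/2)) p)) as [s' [Hs' Hle]].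
  apply pw_nonneg. apply Key; lra.
  unfold nrm at 1. rewrite (series_sum_eq _ s' Hs').
  replace (nrm p a + nrm p b + e) with (nrm p a + e/2 + (nrm p b + e/2)) by field.
  rewrite <- (rpow_inv p (nrm p a + e / 2 + (nrm p b + e / 2))) by (pose proof (nrm_ge0 p a); pose proof (nrm_ge0 p b); lra).
  apply rpow_le. apply Rdiv_lt_0_compat; lra.
  split; auto. eapply isum_ge0; [apply pw_nonneg|eauto].
Qed.

From Stdlib Require Import Lia FunctionalExtensionality.

Lemma sum_zero f n : (forall i, (i <= n)%nat -> f i = 0) -> sum_f_R0 f n = 0.
Proof.
  induction n; intros H; simpl. apply H; lia.
  rewrite IHn by (intros; apply H; lia). rewrite H by lia. ring.
Qed.

Lemma fin_supp_sum f N : (forall n, (N < n)%nat -> f n = 0) -> infinite_sum f (sum_f_R0 f N).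
Proof.
  intros H e He. exists N. intros n Hn.
  assert (E : forall k, sum_f_R0 f (N + k) = sum_f_R0 f N).
  { induction k. rewrite Nat.add_0_r; auto.
    rewrite Nat.add_succ_r. simpl. rewrite IHk, H by lia. ring. }
  replace n with (N + (n - N))%nat by lia. rewrite E. unfold Rdist.
  rewrite Rminus_diag, Rabs_R0. lra.
Qed.

Lemma zero_summable p : summable (pw p (fun _ => 0)) /\ nrm p (fun _ => 0) = 0.
Proof.
  assert (infinite_sum (pw p (fun _ => 0)) 0).
  { pose proof (fin_supp_sum (pw p (fun _ => 0)) 0) as H.
    simpl in H. replace (pw p (fun _ : nat => 0) 0) with 0 in H by (unfold pw; rewrite rpow_0; auto). apply H.
    intros; unfold pw; apply rpow_0. }
  split. exists 0; auto. unfold nrm. rewrite (series_sum_eq _ 0 H). apply rpow_0.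
Qed.

Lemma single_nrm p k v : 0 < p -> 0 <= v ->
  summable (pw p (fun n => if n =? k then v else 0)) /\
  nrm p (fun n => if n =? k then v else 0) = v.
Proof.
  intros Hp Hv. set (e := fun n => if n =? k then v else 0).
  assert (Hs : infinite_sum (pw p e) (rpow v p)).
  { replace (rpow v p) with (sum_f_R0 (pw p e) k).
    apply fin_supp_sum. intros n Hn. unfold pw, e.
    destruct (Nat.eqb_spec n k). lia. apply rpow_0.
    destruct k; simpl. unfold pw, e; simpl. auto.
    rewrite sum_zero. unfold pw, e. rewrite Nat.eqb_refl. ring.
    intros i Hi. unfold pw, e. destruct (Nat.eqb_spec i (S k)). lia. apply rpow_0. }
  split. exists (rpow v p); auto.
  unfold nrm. rewrite (series_sum_eq _ _ Hs). apply rpow_inv; auto.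
Qed.

Lemma fin_supp_nrm p N eta h : 1 <= p -> nonneg h -> (forall n, (N <= n)%nat -> h n = 0) ->
  (forall n, h n <= eta) -> 0 <= eta ->
  summable (pw p h) /\ nrm p h <= INR N * eta.
Proof.
  intros Hp. revert h. induction N; intros h Hh Hsup Hle He.
  - assert (forall n, h n <= 0) by (intro n; rewrite Hsup by lia; lra).
    destruct (zero_summable p) as [Z1 Z2].
    destruct (mink p (fun _ => 0) (fun _ => 0) h Hp) as [S1 S2]; auto.
    intro; lra. intro; lra. intro n; specialize (H n); lra.
    split; auto. rewrite Z2 in S2. simpl. lra.
  - set (a := fun n => if n <? N then h n else 0).
    set (b := fun n => if n =? N then h N else 0).
    assert (Ha : nonneg a) by (intro n; unfold a; destruct (n <? N); [apply Hh|lra]).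
    assert (Hb : nonneg b) by (intro n; unfold b; destruct (n =? N); [apply Hh|lra]).
    destruct (IHN a Ha) as [Sa Na].
    { intros n Hn. unfold a. destruct (Nat.ltb_spec n N); [lia|auto]. }
    { intros n. unfold a. destruct (n <? N); [apply Hle|lra]. }
    auto.
    destruct (single_nrm p N (h N)) as [Sb Nb]; try lra; auto.
    destruct (mink p a b h Hp Ha Hb Hh Sa Sb) as [S1 S2].
    { intro n. unfold a, b. destruct (Nat.ltb_spec n N); destruct (Nat.eqb_spec n N); try lia.
      - pose proof (Hh n); lra.
      - subst; pose proof (Hh N); lra.
      - rewrite Hsup by lia. lra. }
    split; auto. fold b in Nb. rewrite Nb in S2. rewrite S_INR. pose proof (Hle N). lra.
Qed.

Lemma term_le_nrm p a n : 0 < p -> nonneg a -> summable (pw p a) -> a n <= nrm p a.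
Proof.
  intros Hp Ha [s Hs]. unfold nrm. rewrite (series_sum_eq _ s Hs).
  rewrite <- (rpow_inv p (a n)) by auto. apply rpow_le. apply Rdiv_lt_0_compat; lra.
  split. apply rpow_ge0. apply (isum_term (pw p a)); auto. apply pw_nonneg.
Qed.

Lemma cmp p a c : 1 <= p -> nonneg a -> nonneg c -> summable (pw p a) ->
  (forall n, c n <= a n) -> summable (pw p c) /\ nrm p c <= nrm p a.
Proof.
  intros Hp Ha Hc Sa H. destruct (zero_summable p) as [Z1 Z2].
  destruct (mink p a (fun _ => 0) c Hp Ha) as [S1 S2]; auto. intro; lra.
  intro n; specialize (H n); lra.
  rewrite Z2 in S2. split; auto; lra.
Qed.

Definition tail (N : nat) (u : nat -> R) : nat -> R := fun n => if n <=? N then 0 else u n.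

Lemma tail_partial f N n : sum_f_R0 (fun k => if k <=? N then 0 else f k) n =
  if n <=? N then 0 else sum_f_R0 f n - sum_f_R0 f N.
Proof.
  induction n. simpl. destruct (Nat.leb_spec 0 N); [auto|lia].
  rewrite !tech5, IHn; cbv beta.
  destruct (Nat.leb_spec n N); destruct (Nat.leb_spec (S n) N); try lia; try ring.
  assert (n = N) by lia. subst. ring.
Qed.

Lemma tail_small p u eps : 0 < p -> nonneg u -> summable (pw p u) -> 0 < eps ->
  exists N, nonneg (tail N u) /\ summable (pw p (tail N u)) /\ nrm p (tail N u) < eps /\
    forall n, (N < n)%nat -> tail N u n = u n.
Proof.
  intros Hp Hu [s Hs] He.
  assert (Hep : 0 < rpow eps p) by (apply rpow_gt0; auto).
  destruct (Hs (rpow eps p) Hep) as [N HN]. specialize (HN N (Nat.le_refl N)).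
  unfold Rdist in HN. apply Rabs_def2 in HN.
  pose proof (isum_partial (pw p u) s N (pw_nonneg p u) Hs).
  assert (Htn : nonneg (tail N u)) by (intro n; unfold tail; destruct (n <=? N); [lra|apply Hu]).
  assert (Heq : forall n, pw p (tail N u) n = (fun k => if k <=? N then 0 else pw p u k) n).
  { intro n; unfold pw, tail. destruct (n <=? N); auto. apply rpow_0. }
  assert (Hbd : forall n, sum_f_R0 (pw p (tail N u)) n <= s - sum_f_R0 (pw p u) N).
  { intro n. rewrite (sum_eq _ _ n (fun i _ => Heq i)), tail_partial.
    destruct (n <=? N). lra. pose proof (isum_partial (pw p u) s n (pw_nonneg p u) Hs). lra. }
  destruct (isum_le_bound _ _ (pw_nonneg p (tail N u)) Hbd) as [t [Ht Htle]].
  exists N. split; auto. split. exists t; auto. split.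
  - unfold nrm. rewrite (series_sum_eq _ t Ht).
    rewrite <- (rpow_inv p eps) by lra.
    apply rpow_lt. apply Rdiv_lt_0_compat; lra.
    split. eapply isum_ge0; [apply pw_nonneg|eauto]. lra.
  - intros n Hn. unfold tail. destruct (Nat.leb_spec n N); [lia|auto].
Qed.

Lemma fin_delta {X : Type} (r v : X -> nat -> R) eta :
  (forall n, exists d, 0 < d /\ forall z, v z n < d -> r z n < eta) ->
  forall M, exists d, 0 < d /\ forall n z, (n < M)%nat -> v z n < d -> r z n < eta.
Proof.
  intros H M. induction M.
  - exists 1. split. lra. intros; lia.
  - destruct IHM as [d [Hd Hd']]. destruct (H M) as [d2 [Hd2 Hd2']].
    exists (Rmin d d2). split. apply Rmin_pos; auto.
    intros n z Hn Hv. destruct (Nat.eq_dec n M).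
    + subst. apply Hd2'. pose proof (Rmin_r d d2). lra.
    + apply Hd'. lia. pose proof (Rmin_l d d2). lra.
Qed.

Lemma key {X : Type} p (u : nat -> R) (r v : X -> nat -> R) :
  1 <= p -> nonneg u -> summable (pw p u) ->
  (forall z, nonneg (r z)) -> (forall z, nonneg (v z)) ->
  (forall z n, r z n <= u n + v z n) ->
  (forall n eta, 0 < eta -> exists d, 0 < d /\ forall z, v z n < d -> r z n < eta) ->
  forall eps, 0 < eps -> exists d, 0 < d /\ forall z, summable (pw p (v z)) ->
    nrm p (v z) < d -> summable (pw p (r z)) /\ nrm p (r z) < eps.
Proof.
  intros Hp Hu Su Hr Hv Hruv Hc eps He.
  destruct (tail_small p u (eps/3)) as [N [Htn [Stn [Ntn Htl]]]]; auto; try lra.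
  set (eta := eps / (3 * (INR N + 2))).
  assert (HN0 : 0 <= INR N) by apply pos_INR.
  assert (Heta : 0 < eta) by (unfold eta; apply Rdiv_lt_0_compat; lra).
  destruct (fin_delta r v eta (fun n => Hc n eta Heta) (S N)) as [dh [Hdh Hdh']].
  exists (Rmin dh (eps/3)). split. apply Rmin_pos; lra.
  intros z Svz Nvz.
  pose proof (Rmin_l dh (eps/3)). pose proof (Rmin_r dh (eps/3)).
  set (h := fun n => if n <=? N then r z n else 0).
  set (t := fun n => if n <=? N then 0 else r z n).
  assert (Hh : nonneg h) by (intro n; unfold h; destruct (n <=? N); [apply Hr|lra]).
  assert (Ht : nonneg t) by (intro n; unfold t; destruct (n <=? N); [lra|apply Hr]).
  destruct (fin_supp_nrm p (S N) eta h Hp Hh) as [Sh Nh]; try lra.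
  { intros n Hn. unfold h. destruct (Nat.leb_spec n N); [lia|auto]. }
  { intros n. unfold h. destruct (Nat.leb_spec n N); [|lra].
    left. apply Hdh'. lia. pose proof (Hv z n).
    assert (v z n <= nrm p (v z)) by (apply term_le_nrm; auto; lra). lra. }
  destruct (mink p (tail N u) (v z) t Hp Htn (Hv z) Ht Stn Svz) as [St Nt].
  { intro n. unfold t, tail. destruct (n <=? N). pose proof (Hv z n); lra. apply Hruv. }
  destruct (mink p h t (r z) Hp Hh Ht (Hr z) Sh St) as [Sr Nr].
  { intro n. unfold h, t. destruct (n <=? N); lra. }
  split; auto.
  assert (INR (S N) * eta < eps / 3).
  { unfold eta. rewrite S_INR.
    replace ((INR N + 1) * (eps / (3 * (INR N + 2)))) with ((eps/3) * ((INR N + 1) / (INR N + 2))) by (field; lra).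
    assert ((INR N + 1) / (INR N + 2) < 1).
    { apply Rmult_lt_reg_r with (INR N + 2). lra. unfold Rdiv. rewrite Rmult_assoc, Rinv_l by lra. lra. }
    assert (0 < eps/3) by lra. nra. }
  lra.
Qed.


Lemma gd_ge0 (G : MetricGroup) x y : 0 <= gdist G x y.
Proof. destruct (gdist_metric G) as [H _]. apply H. Qed.
Lemma gd_sym (G : MetricGroup) x y : gdist G x y = gdist G y x.
Proof. destruct (gdist_metric G) as [_ [_ [H _]]]. apply H. Qed.
Lemma gd_tri (G : MetricGroup) x y z : gdist G x z <= gdist G x y + gdist G y z.
Proof. destruct (gdist_metric G) as [_ [_ [_ H]]]. apply H. Qed.
Lemma gd_0 (G : MetricGroup) x y : gdist G x y = 0 <-> x = y.
Proof. destruct (gdist_metric G) as [_ [H _]]. apply H. Qed.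
Lemma gd_xx (G : MetricGroup) x : gdist G x x = 0.
Proof. apply gd_0; auto. Qed.

Lemma gd_mul_e (G : MetricGroup) x y :
  gdist G (gmul G x y) x = gdist G y (gone G).
Proof. rewrite <- (gdist_linv G x y (gone G)), gmul1r. auto. Qed.

Lemma gd_inv_e (G : MetricGroup) x : gdist G (ginv G x) (gone G) = gdist G x (gone G).
Proof.
  rewrite <- (gdist_linv G x (ginv G x) (gone G)), gmulVr, gmul1r. apply gd_sym.
Qed.

Lemma gd_mul_le (G : MetricGroup) x y :
  gdist G (gmul G x y) (gone G) <= gdist G x (gone G) + gdist G y (gone G).
Proof.
  pose proof (gd_tri G (gmul G x y) x (gone G)). rewrite gd_mul_e in H. lra.
Qed.

Lemma gd_rmul (G : MetricGroup) x x' y :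
  gdist G (gmul G x y) (gmul G x' y) <= 2 * gdist G y (gone G) + gdist G x x'.
Proof.
  pose proof (gd_tri G (gmul G x y) x (gmul G x' y)).
  pose proof (gd_tri G x x' (gmul G x' y)).
  rewrite gd_mul_e in H. rewrite (gd_sym G x' (gmul G x' y)), gd_mul_e in H0. lra.
Qed.

Lemma gd_inv2 (G : MetricGroup) x x' :
  gdist G (ginv G x) (ginv G x') <= 2 * gdist G x (gone G) + gdist G x x'.
Proof.
  pose proof (gd_tri G (ginv G x) (gone G) (ginv G x')).
  rewrite gd_inv_e, (gd_sym G (gone G)), gd_inv_e in H.
  pose proof (gd_tri G x' x (gone G)). rewrite (gd_sym G x' x) in H0. lra.
Qed.

Lemma gd_dist_le (G : MetricGroup) x y :
  gdist G x y <= gdist G x (gone G) + gdist G y (gone G).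
Proof. pose proof (gd_tri G x (gone G) y). rewrite (gd_sym G (gone G) y) in H. lra. Qed.

Definition Dseq (G : nat -> MetricGroup) (x y : Prod G) : nat -> R := fun n => gdist (G n) (x n) (y n).
Definition Eseq (G : nat -> MetricGroup) (x : Prod G) : nat -> R := fun n => gdist (G n) (x n) (gone (G n)).

Lemma inlp_E G p x : in_lp G p x <-> summable (pw p (Eseq G x)).
Proof. split; auto. Qed.
Lemma lpd_D G p x y : lp_dist G p x y = nrm p (Dseq G x y).
Proof. reflexivity. Qed.

Lemma D_nonneg G x y : nonneg (Dseq G x y).
Proof. intro n; apply gd_ge0. Qed.
Lemma E_nonneg G x : nonneg (Eseq G x).
Proof. intro n; apply gd_ge0. Qed.

Lemma D_summable G p x y : 1 <= p -> in_lp G p x -> in_lp G p y -> summable (pw p (Dseq G x y)).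
Proof.
  intros Hp Hx Hy. apply inlp_E in Hx, Hy.
  destruct (mink p (Eseq G x) (Eseq G y) (Dseq G x y) Hp); auto using E_nonneg, D_nonneg.
  intro n; apply gd_dist_le.
Qed.

Lemma two_summable p a : 1 <= p -> nonneg a -> summable (pw p a) -> nonneg (fun n => 2 * a n) /\ summable (pw p (fun n => 2 * a n)).
Proof.
  intros Hp Ha Sa. assert (nonneg (fun n => 2 * a n)) by (intro n; pose proof (Ha n); lra).
  split; auto. destruct (mink p a a (fun n => 2 * a n) Hp); auto. intro; lra.
Qed.

Theorem mainTheorem16 (G : nat -> MetricGroup) (p : R) (hp : 1 <= p) :
  lp_is_topological_group G p.
Proof.
  assert (Hp0 : 0 < p) by lra.
  unfold lp_is_topological_group.
  split; [|split; [|split; [|split; [|split; [|split; [|split; [|split; [|split]]]]]]]].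
  -
    apply inlp_E. destruct (zero_summable p) as [Z _].
    destruct (cmp p (fun _ => 0) (Eseq G (pone G))) as [S _]; auto using E_nonneg.
    intro; lra. intro n; unfold Eseq, pone; rewrite gd_xx; lra.
  - intros x y Hx Hy. apply inlp_E in Hx, Hy. apply inlp_E.
    destruct (mink p (Eseq G x) (Eseq G y) (Eseq G (pmul G x y)) hp); auto using E_nonneg.
    intro n; apply gd_mul_le.
  - intros x Hx. apply inlp_E in Hx. apply inlp_E.
    destruct (cmp p (Eseq G x) (Eseq G (pinv G x)) hp); auto using E_nonneg.
    intro n; unfold Eseq, pinv; rewrite gd_inv_e; lra.
  - intros x y Hx Hy. apply (D_summable G p x y hp Hx Hy).
  - intros; apply rpow_ge0.
  - intros x y Hx Hy. rewrite lpd_D. split.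
    + intros H0. apply functional_extensionality_dep. intro n.
      apply (gd_0 (G n)).
      pose proof (term_le_nrm p (Dseq G x y) n Hp0 (D_nonneg G x y) (D_summable G p x y hp Hx Hy)).
      pose proof (D_nonneg G x y n). unfold Dseq in *. lra.
    + intros ->. destruct (zero_summable p) as [Z Z2].
      destruct (cmp p (fun _ => 0) (Dseq G y y)) as [_ S]; auto using D_nonneg.
      intro; lra. intro n; unfold Dseq; rewrite gd_xx; lra.
      pose proof (nrm_ge0 p (Dseq G y y)). lra.
  - intros x y Hx Hy. rewrite !lpd_D.
    destruct (cmp p (Dseq G x y) (Dseq G y x)) as [_ S1]; auto using D_nonneg, D_summable.
    intro n; unfold Dseq; rewrite gd_sym; lra.
    destruct (cmp p (Dseq G y x) (Dseq G x y)) as [_ S2]; auto using D_nonneg, D_summable.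
    intro n; unfold Dseq; rewrite gd_sym; lra.
    lra.
  - intros x y z Hx Hy Hz. rewrite !lpd_D.
    destruct (mink p (Dseq G x y) (Dseq G y z) (Dseq G x z)); auto using D_nonneg, D_summable.
    intro n; apply gd_tri.
  -
    intros x y eps Hx Hy He.
    pose proof Hy as HyE. apply inlp_E in HyE.
    destruct (two_summable p (Eseq G y) hp (E_nonneg G y) HyE) as [Hu Su].
    destruct (key p (fun n => 2 * Eseq G y n)
                (fun x' n => gdist (G n) (gmul (G n) (x n) (y n)) (gmul (G n) (x' n) (y n)))
                (fun x' => Dseq G x x') hp Hu Su) with (eps := eps/2) as [d1 [Hd1 Hd1']].
    + intros z n; apply gd_ge0.
    + intros z; apply D_nonneg.
    + intros z n. apply gd_rmul.
    + intros n eta Heta. destruct (gmul_cont (G n) (x n) (y n) eta Heta) as [d [Hd Hd']].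
      exists d; split; auto. intros z Hz. apply Hd'; auto. rewrite gd_xx; lra.
    + lra.
    + exists (Rmin d1 (eps/2)). split. apply Rmin_pos; lra.
      intros x' y' Hx' Hy' Hdx Hdy. rewrite lpd_D in *.
      pose proof (Rmin_l d1 (eps/2)). pose proof (Rmin_r d1 (eps/2)).
      destruct (Hd1' x' (D_summable G p x x' hp Hx Hx')) as [Sr Nr]; [lra|].
      destruct (mink p _ (Dseq G y y') (Dseq G (pmul G x y) (pmul G x' y')) hp
                 (fun n => gd_ge0 _ _ _) (D_nonneg G y y') (D_nonneg _ _ _) Sr (D_summable G p y y' hp Hy Hy'))
        as [_ Nm].
      { intro n. unfold Dseq, pmul. rewrite <- (gdist_linv (G n) (x' n) (y n) (y' n)). apply gd_tri. }
      lra.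
  -
    intros x eps Hx He.
    pose proof Hx as Hx'. apply inlp_E in Hx'.
    destruct (two_summable p (Eseq G x) hp (E_nonneg G x) Hx') as [Hu Su].
    destruct (key p (fun n => 2 * Eseq G x n)
                (fun x' n => gdist (G n) (ginv (G n) (x n)) (ginv (G n) (x' n)))
                (fun x' => Dseq G x x') hp Hu Su) with (eps := eps) as [d1 [Hd1 Hd1']]; auto.
    + intros z n; apply gd_ge0.
    + intros z; apply D_nonneg.
    + intros z n. apply gd_inv2.
    + intros n eta Heta. destruct (ginv_cont (G n) (x n) eta Heta) as [d [Hd Hd']].
      exists d; split; auto.
    + exists d1. split; auto. intros x' Hx'' Hdx. rewrite lpd_D in *.
      destruct (Hd1' x' (D_summable G p x x' hp Hx Hx'')) as [Sr Nr]; auto.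
Qed.
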